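(* Let $\Gamma$ be a graph, possibly with some 2-fold edges. Then $\Gamma$ is the family diagram of at most one family of spherical simplices whose dihedral angles lie in $\{\frac{\pi}{2},\frac{\pi}{3},\frac{2\pi}{3},\frac{\pi}{4},\frac{3\pi}{4}\}$ (families considered up to isometry).
   Context: A spherical simplex in $S^n\subset\mathbb{R}^{n+1}$ is given by unit outer normals $f_1,\dots,f_{n+1}$ to its facets; the hyperplanes $f_i^\perp$ cut $S^n$ into $2^{n+1}$ simplices encoded by $\pm f_1,\dots,\pm f_{n+1}$, called a family. For a simplex whose dihedral angles are of the form $\pi/k$ or $\pi(k-1)/k$, its family diagram is the graph with vertices $v_i$ corresponding to the $f_i$, where $v_i$ and $v_j$ are joined by a $(k-2)$-fold edge if the angle between $f_i,f_j$ is $\pi/k$ or $\pi(k-1)/k$, and are not joined if $f_i\perp f_j$. All simplices of a family have the same family diagram. *)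

(* Defs.v *)
From HB Require Import structures.
From mathcomp Require Import all_boot all_order all_algebra.
From mathcomp Require Import all_classical all_reals all_analysis.
Set Implicit Arguments. Unset Strict Implicit. Unset Printing Implicit Defensive.
Import Order.TTheory GRing.Theory Num.Theory.
Local Open Scope ring_scope.

Definition dotp {R : realType} {m : nat} (u v : 'rV[R]_m) : R := (u *m v^T) 0 0.

(* A spherical simplex in S^n, given by its unit outer facet normals
   f_0, ..., f_n in R^(n+1); they must be unit vectors and linearly
   independent. The family is {±f_i}. *)
Definition simplex_normals {R : realType} (n : nat)
  (f : 'I_n.+1 -> 'rV[R]_n.+1) : Prop :=
  (forall i, dotp (f i) (f i) = 1) /\ row_free (\matrix_(i < n.+1) f i).

Definition dihedral {R : realType} (n : nat) (f : 'I_n.+1 -> 'rV[R]_n.+1)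
  (i j : 'I_n.+1) : R := pi - acos (dotp (f i) (f j)).

Definition admissible_angles {R : realType} (n : nat)
  (f : 'I_n.+1 -> 'rV[R]_n.+1) : Prop :=
  forall i j : 'I_n.+1, i != j ->
    let t := dihedral f i j in
    t = pi / 2 \/ t = pi / 3 \/ t = 2 * pi / 3 \/ t = pi / 4 \/ t = 3 * pi / 4.

(* Gamma (edge multiplicities between vertices v_i, v_j) is the family diagram
   of the simplex with normals f: v_i, v_j are joined by a (k-2)-fold edge
   iff the angle is pi/k or pi(k-1)/k (k = 2: not joined). *)
Definition is_family_diagram {R : realType} (n : nat)
  (f : 'I_n.+1 -> 'rV[R]_n.+1) (Gamma : 'I_n.+1 -> 'I_n.+1 -> nat) : Prop :=
  forall i j : 'I_n.+1, i != j ->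
    exists k : nat, (2 <= k)%N /\
      (dihedral f i j = pi / k%:R \/ dihedral f i j = pi * (k.-1)%:R / k%:R) /\
      Gamma i j = (k - 2)%N.

(* Main.v *)
Require Import Defs.
From HB Require Import structures.
From mathcomp Require Import all_boot all_order all_algebra.
From mathcomp Require Import all_classical all_reals all_analysis.
From mathcomp Require Import ring lra zify.
Set Implicit Arguments. Unset Strict Implicit. Unset Printing Implicit Defensive.
Import Order.TTheory GRing.Theory Num.Theory.
Local Open Scope ring_scope.

Definition nxt (L t : nat) : nat := if t.+1 == L then 0%N else t.+1.

Lemma nxt_lt L t : (t < L)%N -> (nxt L t < L)%N.
Proof. rewrite /nxt; case: (t.+1 =P L) => h; lia. Qed.

Lemma nxt_neq L t : (2 <= L)%N -> (t < L)%N -> nxt L t != t.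
Proof. rewrite /nxt; case: (t.+1 =P L) => h; lia. Qed.

Lemma nxt2_neq L t : (3 <= L)%N -> (t < L)%N -> nxt L (nxt L t) != t.
Proof.
move=> h1 h2; rewrite /nxt; case: (t.+1 =P L) => h; case: (_ =P L) => h'; lia.
Qed.

Lemma sum_ind (R : realFieldType) (L : nat) (a : 'I_L) (F : 'I_L -> R) :
  \sum_t (t == a)%:R * F t = F a.
Proof.
rewrite (bigD1 a) //= eqxx mul1r big1 ?addr0 // => t /negPf ->.
by rewrite mul0r.
Qed.

Section PD.
Variable R : realFieldType.
Variable N : nat.
Variable M : 'I_N -> 'I_N -> R.
Hypothesis Ms : forall i j, M i j = M j i.
Hypothesis M1 : forall i, M i i = 1.
Hypothesis Mpd : forall w : 'I_N -> R, (exists i, w i != 0) ->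
  0 < \sum_i \sum_j w i * w j * M i j.

Lemma chordless_contra (x : 'I_N) (c : seq 'I_N) :
  uniq c -> (3 <= size c)%N ->
  (forall t, (t < size c)%N ->
     1/4 <= M (nth x c t) (nth x c (nxt (size c) t)) ^+ 2) ->
  (forall s t, (s < size c)%N -> (t < size c)%N ->
     M (nth x c s) (nth x c t) != 0 ->
     [\/ s = t, t = nxt (size c) s | s = nxt (size c) t]) ->
  \prod_(t < size c) Num.sg (M (nth x c t) (nth x c (nxt (size c) t)))
     = (-1) ^+ size c ->
  False.
Proof.
move=> uc L3 big chl prodsg.
move: big chl prodsg; set L := size c => big chl prodsg.
have L0 : (0 < L)%N by lia.
pose e t := M (nth x c t) (nth x c (nxt L t)).
pose y (s : nat) := \prod_(t < s) (- Num.sg (e t)).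
have e0 : forall t, (t < L)%N -> e t != 0.
  move=> t ht; apply/eqP => h; have := big t ht; rewrite -/(e t) h expr0n /=.
  lra.
have ysq : forall s, (s <= L)%N -> y s * y s = 1.
  elim => [|s IH] hs; first by rewrite /y big_ord0 mulr1.
  rewrite /y big_ord_recr /= -/(y s) mulrACA IH ?(ltnW hs) // mul1r mulrNN.
  by rewrite -expr2 sqr_sg e0.
have yL : y L = 1.
  rewrite /y prodrN card_ord prodsg -exprMn mulrNN mulr1 expr1n //.
have key : forall s, (s < L)%N -> y s * y (nxt L s) * e s = - `|e s|.
  move=> s hs; rewrite normrEsg; have := nxt_lt hs; rewrite /nxt.
  case: (s.+1 =P L) => h _.
    rewrite [y 0%N]/y big_ord0 mulr1.
    have hyL : y s * (- Num.sg (e s)) = 1 by rewrite -yL -h /y big_ord_recr.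
    have -> : y s = - Num.sg (e s).
      have h2 : Num.sg (e s) * Num.sg (e s) = 1 by rewrite -expr2 sqr_sg e0.
      by rewrite -[y s]mulr1 -h2 -[Num.sg _ * _]mulrNN mulrA hyL mul1r.
    by rewrite mulNr.
  rewrite /y big_ord_recr /= -/(y s) mulrA ysq ?(ltnW hs) // mul1r mulNr.
  by [].
pose Y (i : 'I_N) := if i \in c then y (index i c) else 0.
have Ynth : forall s, (s < L)%N -> Y (nth x c s) = y s.
  by move=> s hs; rewrite /Y mem_nth // index_uniq.
have sumc : forall F : 'I_N -> R, (forall i, i \notin c -> F i = 0) ->
    \sum_i F i = \sum_(s < L) F (nth x c s).
  move=> F hF; rewrite (bigID (mem c)) /= [X in _ + X]big1 ?addr0; last first.
    by move=> i /hF.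
  by rewrite -big_uniq // (big_nth x) big_mkord.
have Q : \sum_i \sum_j Y i * Y j * M i j =
   \sum_(s < L) \sum_(t < L) y s * y t * M (nth x c s) (nth x c t).
  rewrite sumc; last first.
    by move=> i hi; apply: big1 => j _; rewrite /Y (negPf hi) !mul0r.
  apply: eq_bigr => s _; rewrite sumc; last first.
    by move=> j hj; rewrite /Y (negPf hj) mulr0 mul0r.
  by apply: eq_bigr => t _; rewrite !Ynth.
have Ypos : 0 < \sum_i \sum_j Y i * Y j * M i j.
  by apply: Mpd; exists (nth x c 0); rewrite Ynth // /y big_ord0 oner_neq0.
move: Ypos; rewrite Q.
pose P (s t : 'I_L) := y s * y t * M (nth x c s) (nth x c t).
pose nx (s : 'I_L) : 'I_L := Ordinal (nxt_lt (ltn_ord s)).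
have dec : forall s t : 'I_L,
   P s t = (t == s)%:R * P s t + (t == nx s)%:R * P s t + (s == nx t)%:R * P s t.
  move=> s t; have [hM|hM] := eqVneq (M (nth x c s) (nth x c t)) 0.
    by rewrite /P hM !mulr0 !addr0.
  have a1 : ((s : nat) == nxt L s) = false.
    by rewrite eq_sym; apply: negbTE; apply: nxt_neq; [lia|exact: ltn_ord].
  have a1' : ((t : nat) == nxt L t) = false.
    by rewrite eq_sym; apply: negbTE; apply: nxt_neq; [lia|exact: ltn_ord].
  have b1 : (nxt L s == (s : nat)) = false by apply: negbTE; apply: nxt_neq; [lia|exact: ltn_ord].
  have b2 : ((s : nat) == nxt L (nxt L s)) = false.
    by rewrite eq_sym; apply: negbTE; apply: nxt2_neq; [lia|exact: ltn_ord].
  have b2' : ((t : nat) == nxt L (nxt L t)) = false.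
    by rewrite eq_sym; apply: negbTE; apply: nxt2_neq; [lia|exact: ltn_ord].
  rewrite -!val_eqE /=.
  case: (chl s t (ltn_ord s) (ltn_ord t) hM) => h.
  - by rewrite -h eqxx a1 /= mul1r !mul0r !addr0.
  - by rewrite h eqxx b1 b2 mul1r !mul0r add0r addr0.
  - by rewrite h eqxx a1' b2' mul1r !mul0r !add0r.
have -> : \sum_(s < L) \sum_(t < L) y s * y t * M (nth x c s) (nth x c t)
   = \sum_(s < L) \sum_(t < L) P s t by [].
under eq_bigr => s _ do under eq_bigr => t _ do rewrite dec.
under eq_bigr => s _ do rewrite 2!big_split /=.
rewrite 2!big_split /=.
under eq_bigr => s _ do rewrite sum_ind.
under [X in _ + X + _]eq_bigr => s _ do rewrite sum_ind.
rewrite exchange_big /=.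
under [X in _ + _ + X]eq_bigr => s _ do rewrite sum_ind.
have h1 : forall s : 'I_L, P s s = 1.
  by move=> s; rewrite /P M1 mulr1 ysq // ltnW.
have h2 : forall s : 'I_L, P s (nx s) = - `|e s|.
  by move=> s; rewrite /P key.
have h3 : forall s : 'I_L, P (nx s) s = - `|e s|.
  by move=> s; rewrite -h2 /P Ms [y (nx s) * _]mulrC.
under eq_bigr => s _ do rewrite h1.
under [X in _ + X + _]eq_bigr => s _ do rewrite h2.
under [X in _ + _ + X]eq_bigr => s _ do rewrite h3.
rewrite -!big_split /=.
suff : \sum_(i < L) (1 + - `|e i| + - `|e i|) <= 0.
  move=> h1' h2'; have := lt_le_trans h2' h1'; by rewrite ltxx.
apply: sumr_le0 => s _.
have hb := big s (ltn_ord s).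
have : 1/4 <= `|e s| ^+ 2 by rewrite real_normK ?num_real.
have := normr_ge0 (e s).
move: (`|e s|) => a ha hb'.
nra.
Qed.
End PD.

Section Comb.
Variable R : realFieldType.
Variable N : nat.
Variables A B : 'I_N -> 'I_N -> R.
Hypothesis As : forall i j, A i j = A j i.
Hypothesis Bs : forall i j, B i j = B j i.
Hypothesis A1 : forall i, A i i = 1.
Hypothesis B1 : forall i, B i i = 1.
Hypothesis ABsq : forall i j, A i j ^+ 2 = B i j ^+ 2.
Hypothesis Abig : forall i j, i != j -> A i j != 0 -> 1/4 <= A i j ^+ 2.
Hypothesis Apd : forall w : 'I_N -> R, (exists i, w i != 0) ->
  0 < \sum_i \sum_j w i * w j * A i j.
Hypothesis Bpd : forall w : 'I_N -> R, (exists i, w i != 0) ->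
  0 < \sum_i \sum_j w i * w j * B i j.

Definition adj : rel 'I_N := fun i j => (i != j) && (A i j != 0).
Definition sgab (i j : 'I_N) : R := if A i j == B i j then 1 else -1.

Lemma adj_sym : symmetric adj.
Proof. by move=> i j; rewrite /adj eq_sym As. Qed.

Lemma sig_sym i j : sgab i j = sgab j i.
Proof. by rewrite /sgab As Bs. Qed.

Lemma sig_sq i j : sgab i j * sgab i j = 1.
Proof. by rewrite /sgab; case: ifP => _; rewrite ?mulr1 ?mulrNN ?mulr1. Qed.

Lemma A_sig i j : A i j = sgab i j * B i j.
Proof.
rewrite /sgab; case: eqP => [->|h]; first by rewrite mul1r.
have := ABsq i j; move/eqP; rewrite -subr_eq0 subr_sqr mulf_eq0 subr_eq0.
case/orP => [/eqP//|]; rewrite addr_eq0 => /eqP ->; by rewrite mulN1r.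
Qed.

Lemma B0 i j : (B i j == 0) = (A i j == 0).
Proof. by rewrite -sqrf_eq0 -ABsq sqrf_eq0. Qed.

Fixpoint wprod (x : 'I_N) (s : seq 'I_N) : R :=
  if s is y :: s' then sgab x y * wprod y s' else 1.
Definition cprod (c : seq 'I_N) : R :=
  if c is x :: p then wprod x (rcons p x) else 1.

Lemma wprod_cat x s1 s2 :
  wprod x (s1 ++ s2) = wprod x s1 * wprod (last x s1) s2.
Proof. by elim: s1 x => [|y s1 IH] x /=; rewrite ?mul1r // IH mulrA. Qed.

Lemma wprod_rcons x s y : wprod x (rcons s y) = wprod x s * sgab (last x s) y.
Proof. by rewrite -cats1 wprod_cat /= mulr1. Qed.

Lemma wprod_sq x s : wprod x s * wprod x s = 1.
Proof.
elim: s x => [|y s IH] x /=; first by rewrite mulr1.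
by rewrite mulrACA sig_sq IH mulr1.
Qed.

Lemma cprod_catC s1 s2 : cprod (s1 ++ s2) = cprod (s2 ++ s1).
Proof.
case: s1 => [|x p1]; first by rewrite cats0.
case: s2 => [|y p2]; first by rewrite cats0.
rewrite /= !rcons_cat /= -(cat_rcons y) -(cat_rcons x) !wprod_cat !last_rcons.
by rewrite mulrC.
Qed.

Lemma last_rev_belast (y : 'I_N) s : last (last y s) (rev (belast y s)) = y.
Proof. by case: s => [|z s] //=; rewrite rev_cons last_rcons. Qed.

Lemma wprod_rev x s : wprod (last x s) (rev (belast x s)) = wprod x s.
Proof.
elim: s x => [|y s IH] x //=.
by rewrite rev_cons wprod_rcons IH last_rev_belast sig_sym mulrC.
Qed.

Lemma wprod_nth x s : wprod x s =
  \prod_(t < size s) sgab (nth x (x :: s) t) (nth x s t).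
Proof.
elim: s x => [|y s IH] x /=; first by rewrite big_ord0.
rewrite big_ord_recl /= IH; congr (_ * _); apply: eq_bigr => t _ /=.
rewrite (set_nth_default y x) 1?(set_nth_default y x (s := s)) //.
  all: case: t => t /= ht; rewrite add0n //; exact: ltnW.
Qed.

Lemma sq1_pm (a : R) : a * a = 1 -> a = 1 \/ a = -1.
Proof.
move=> h; have : (a - 1) * (a + 1) = 0.
  have -> : (a - 1) * (a + 1) = a * a - 1 by ring.
  by rewrite h subrr.
by move/eqP; rewrite mulf_eq0 subr_eq0 addr_eq0 => /orP [/eqP->|/eqP->]; auto.
Qed.

Lemma wprod_pm x s : wprod x s = 1 \/ wprod x s = -1.
Proof. exact: sq1_pm (wprod_sq x s). Qed.

Lemma nth_rcons_cyc (x : 'I_N) p t : (t < size (x :: p))%N ->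
  nth x (x :: rcons p x) t = nth x (x :: p) t /\
  nth x (rcons p x) t = nth x (x :: p) (nxt (size (x :: p)) t).
Proof.
move=> ht; split; first by rewrite -rcons_cons nth_rcons ht.
rewrite nth_rcons /nxt /=; move: ht => /= ht.
case: (t.+1 =P (size p).+1) => h.
  have -> : t = size p by case: h.
  by rewrite ltnn eqxx.
have -> : (t < size p)%N by lia.
by [].
Qed.

Lemma cprod_nth x p : cprod (x :: p) =
  \prod_(t < size (x :: p)) sgab (nth x (x :: p) t) (nth x (x :: p) (nxt (size (x :: p)) t)).
Proof.
rewrite /= wprod_nth size_rcons; apply: eq_bigr => t _.
by have [-> ->] := @nth_rcons_cyc x p t (ltn_ord t).
Qed.

Lemma cycle_nth x p : cycle adj (x :: p) -> forall t, (t < size (x :: p))%N ->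
  adj (nth x (x :: p) t) (nth x (x :: p) (nxt (size (x :: p)) t)).
Proof.
move=> /= /(pathP x) h t ht; have [<- <-] := @nth_rcons_cyc x p t ht.
by apply: h; rewrite size_rcons.
Qed.

Lemma dup_split (T : eqType) (s : seq T) : ~~ uniq s ->
  exists s1 y s2 s3, s = s1 ++ y :: s2 ++ y :: s3.
Proof.
elim: s => [|x p IH] //=; rewrite negb_and negbK; case/orP => [hx|hu].
  by case/splitPr: hx => p1 p2; exists [::], x, p1, p2.
have [s1 [y [s2 [s3 ->]]]] := IH hu; by exists (x :: s1), y, s2, s3.
Qed.

Lemma split_dup y s2 s4 :
  cprod (y :: s2 ++ y :: s4) = cprod (y :: s2) * cprod (y :: s4) /\
  (cycle adj (y :: s2 ++ y :: s4) -> cycle adj (y :: s2) /\ cycle adj (y :: s4)).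
Proof.
rewrite /= rcons_cat /= -cat_rcons wprod_cat cat_path last_rcons; split => //.
by case/andP.
Qed.

Lemma split_chord y z s2 s5 : adj y z ->
  cprod (y :: s2 ++ z :: s5) = cprod (y :: rcons s2 z) * cprod (z :: rcons s5 y) /\
  (cycle adj (y :: s2 ++ z :: s5) ->
     cycle adj (y :: rcons s2 z) /\ cycle adj (z :: rcons s5 y)).
Proof.
move=> ayz.
rewrite /= rcons_cat /= -cat_rcons wprod_cat cat_path last_rcons; split.
  by rewrite !wprod_rcons !last_rcons [sgab z y]sig_sym [RHS]mulrACA sig_sq mulr1.
case/andP => h1 h2.
  by split; rewrite rcons_path last_rcons ?h1 ?h2 //= ?ayz // adj_sym.
Qed.

Lemma take_decomp (T : Type) (x0 : T) (c : seq T) s t :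
  (s < t)%N -> (t < size c)%N ->
  c = take s c ++ nth x0 c s :: take (t - s.+1) (drop s.+1 c) ++ nth x0 c t :: drop t.+1 c.
Proof.
move=> hst htc.
have E1 : drop s c = nth x0 c s :: drop s.+1 c by apply: drop_nth; lia.
have E2 : drop (t - s.+1) (drop s.+1 c) = nth x0 c t :: drop t.+1 c.
  by rewrite drop_drop subnK // (drop_nth x0).
by rewrite -E2 cat_take_drop -E1 cat_take_drop.
Qed.

Lemma prod_sq1 L (F : 'I_L -> R) : (forall t, F t * F t = 1) ->
  (\prod_t F t) * (\prod_t F t) = 1.
Proof. by move=> h; rewrite -big_split /= big1. Qed.

Lemma cycle_cprod L : forall c, (size c <= L)%N -> cycle adj c -> cprod c = 1.
Proof.
elim: L => [|L IH] c hs hc; first by case: c hs hc.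
have [uc|nuc] := boolP (uniq c); last first.
  have [s1 [y [s2 [s3 E]]]] := dup_split nuc.
  have E' : c = s1 ++ (y :: s2 ++ y :: s3) by rewrite E.
  have hc' : cycle adj (y :: s2 ++ y :: (s3 ++ s1)).
    by move: hc; rewrite E' cycle_catC /= -catA.
  have -> : cprod c = cprod (y :: s2 ++ y :: (s3 ++ s1)).
    by rewrite E' cprod_catC /= -catA.
  have [-> /(_ hc') [h1 h2]] := split_dup y s2 (s3 ++ s1).
  move: hs; rewrite E !size_cat /= size_cat => hs.
  have c1 : cprod (y :: s2) = 1.
    by apply: (IH _ _ h1); move: hs => /=; lia.
  have c2 : cprod (y :: (s3 ++ s1)) = 1.
    by apply: (IH _ _ h2); move: hs; rewrite /= size_cat; lia.
  by move: c1 c2 => /= -> ->; rewrite mulr1.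
case: c hs hc uc => [|x p] hs hc uc //.
case: p hs hc uc => [|x1 p] hs hc uc.
  by move: hc; rewrite /= /adj eqxx.
case: p hs hc uc => [|x2 p] hs hc uc.
  by rewrite /= mulr1 [sgab x1 x]sig_sym sig_sq.
move: hs hc uc; set c := [:: x, x1, x2 & p] => hs hc uc.
have L3 : (3 <= size c)%N by [].
pose P (s t : 'I_(size c)) := [&& (s.+1 < t)%N, ~~ ((s == 0 :> nat) && (t.+1 == size c))
   & adj (nth x c s) (nth x c t)].
have [ch|noch] := boolP [exists s, exists t, P s t].
  case/existsP: ch => s /existsP [t /and3P [hst hnot hadj]].
  have E := take_decomp x (ltnW hst) (ltn_ord t).
  set s1 := take s c in E; set s2 := take _ (drop _ _) in E.
  set s4 := drop t.+1 c in E.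
  set y := nth x c s in E hadj; set z := nth x c t in E hadj.
  have E' : c = s1 ++ (y :: s2 ++ z :: s4) by rewrite {1}E.
  have hc' : cycle adj (y :: s2 ++ z :: (s4 ++ s1)).
    by move: hc; rewrite E' cycle_catC /= -catA.
  have -> : cprod c = cprod (y :: s2 ++ z :: (s4 ++ s1)).
    by rewrite E' cprod_catC /= -catA.
  have [-> /(_ hc') [h1 h2]] := split_chord s2 (s4 ++ s1) hadj.
  have hs1 : size s1 = s by rewrite /s1 size_takel //; apply: ltnW; apply: ltn_ord.
  have hs2 : size s2 = (t - s.+1)%N.
    by rewrite /s2 size_takel // size_drop; have := ltn_ord t; lia.
  have hs4 : size s4 = (size c - t.+1)%N by rewrite /s4 size_drop.
  have ht := ltn_ord t.
  move: hnot; rewrite negb_and => hnot.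
  have hnot' : (0 < s)%N || (t.+1 != size c) by move: hnot; case: (s : nat).
  have c1 : cprod (y :: rcons s2 z) = 1.
    apply: (IH _ _ h1); rewrite /= size_rcons hs2.
    by move: hs; case/orP: hnot' => hn; lia.
  have c2 : cprod (z :: rcons (s4 ++ s1) y) = 1.
    apply: (IH _ _ h2); rewrite /= size_rcons size_cat hs1 hs4.
    by move: hs hst; lia.
  by rewrite c1 c2 mulr1.
have noch' : forall s t : 'I_(size c), ~~ P s t.
  move=> s t; apply/negP => hP; apply: (negP noch); apply/existsP; exists s.
  by apply/existsP; exists t.
have chl : forall s t, (s < size c)%N -> (t < size c)%N -> adj (nth x c s) (nth x c t) ->
    [\/ s = t, t = nxt (size c) s | s = nxt (size c) t].
  move=> s t hs' ht' hadj.
  have [hst|hst|hst] := ltngtP s t; last by constructor 1.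
    have := noch' (Ordinal hs') (Ordinal ht'); rewrite /P /= hadj andbT negb_and negbK.
    rewrite /nxt; case/orP => h.
      constructor 2; have -> : (s.+1 == (size p).+3) = false.
        by apply: negbTE; move: ht' hst h; rewrite /c /=; lia.
      by lia.
    by constructor 3; case/andP: h => /eqP -> /eqP ->; rewrite eqxx.
  have := noch' (Ordinal ht') (Ordinal hs'); rewrite /P /= adj_sym hadj andbT negb_and negbK.
  rewrite /nxt; case/orP => h.
    constructor 3; have -> : (t.+1 == (size p).+3) = false.
      by apply: negbTE; move: hs' hst h; rewrite /c /=; lia.
    by lia.
  by constructor 2; case/andP: h => /eqP -> /eqP ->; rewrite eqxx.
have chlM : forall M : 'I_N -> 'I_N -> R, (forall i j, M i j != 0 -> A i j != 0) ->
   forall s t, (s < size c)%N -> (t < size c)%N -> M (nth x c s) (nth x c t) != 0 ->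
    [\/ s = t, t = nxt (size c) s | s = nxt (size c) t].
  move=> M hM s t hs' ht' hne.
  have [->|hst] := eqVneq s t; first by constructor 1.
  apply: chl => //; rewrite /adj (hM _ _ hne) andbT nth_uniq //.
have cadj := @cycle_nth x [:: x1, x2 & p] hc.
have eA0 : forall t, (t < size c)%N -> A (nth x c t) (nth x c (nxt (size c) t)) != 0.
  by move=> t ht; have := cadj t ht; case/andP.
have bigA : forall t, (t < size c)%N ->
    1/4 <= A (nth x c t) (nth x c (nxt (size c) t)) ^+ 2.
  by move=> t ht; have := cadj t ht; case/andP => h1 h2; apply: Abig.
have bigB : forall t, (t < size c)%N ->
    1/4 <= B (nth x c t) (nth x c (nxt (size c) t)) ^+ 2.
  by move=> t ht; rewrite -ABsq; apply: bigA.
have [//|cm] := sq1_pm (wprod_sq x (rcons [:: x1, x2 & p] x)).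
exfalso.
have cm' : cprod c = -1 by [].
rewrite cprod_nth -/c in cm'.
set PA := \prod_(t < size c) Num.sg (A (nth x c t) (nth x c (nxt (size c) t))).
set PB := \prod_(t < size c) Num.sg (B (nth x c t) (nth x c (nxt (size c) t))).
have sgsig : forall i j, Num.sg (sgab i j) = sgab i j.
  by move=> i j; rewrite /sgab; case: ifP => _; rewrite ?sgr1 ?sgrN1.
have hPAB : PA = - PB.
  rewrite /PA; under eq_bigr => t _ do rewrite A_sig sgrM sgsig.
  by rewrite big_split /= cm' mulN1r.
have PAsq : PA * PA = 1.
  apply: prod_sq1 => t; rewrite -expr2 sqr_sg eA0 //.
set S := (-1) ^+ size c : R.
have Ssq : S * S = 1 by rewrite -exprMn mulrNN mulr1 expr1n.
have [hA|hA] := eqVneq PA S.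
  by apply: (chordless_contra As A1 Apd uc L3 bigA (chlM A (fun _ _ h => h))).
have hPB : PB = S.
  have : (PA - S) * (PA + S) = 0.
    by rewrite mulrDr !mulrBl PAsq Ssq [S * PA]mulrC addrA subrK subrr.
  move/eqP; rewrite mulf_eq0 subr_eq0 (negPf hA) /= addr_eq0 => /eqP h.
  by rewrite -[PB]opprK -hPAB h opprK.
apply: (chordless_contra Bs B1 Bpd uc L3 bigB _ hPB).
apply: chlM => i j h; by rewrite -sqrf_eq0 ABsq sqrf_eq0.
Qed.

Lemma eps_exists : exists eps : 'I_N -> R, (forall i, eps i = 1 \/ eps i = -1) /\
  forall i j, A i j = eps i * eps j * B i j.
Proof.
have hsym := sym_connect_sym adj_sym.
have hp : forall i, exists p, path adj (fingraph.root adj i) p /\ last (fingraph.root adj i) p = i.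
  move=> i; have : connect adj (fingraph.root adj i) i by rewrite hsym connect_root.
  by case/connectP => p hp hl; exists p; split.
have [P hP] := fin_all_exists hp.
exists (fun i => wprod (fingraph.root adj i) (P i)); split.
  by move=> i; apply: wprod_pm.
move=> i j.
have [<-|ij] := eqVneq i j; first by rewrite wprod_sq A1 B1 mulr1.
have [A0|A0] := eqVneq (A i j) 0.
  by have := A0; move/eqP; rewrite -B0 => /eqP ->; rewrite A0 mulr0.
have hadj : adj i j by rewrite /adj ij A0.
have rij : fingraph.root adj i = fingraph.root adj j by apply/(fingraph.rootP hsym); exact: connect1.
rewrite rij; set r := fingraph.root adj j.
have [hpi hli] := hP i; have [hpj hlj] := hP j.
rewrite rij -/r in hpi hli.
move: hpj hlj; rewrite -/r => hpj hlj.
set p := P i in hpi hli *; set q := P j in hpj hlj *.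
have Eq : r :: q = rcons (belast r q) j by rewrite lastI hlj.
have cyc : cycle adj (r :: p ++ rev q).
  rewrite /= rcons_cat cat_path hpi hli /=.
  rewrite -rev_cons Eq rev_rcons /= hadj /= -hlj rev_path.
  by rewrite (eq_path (e' := adj)) // => a b; rewrite adj_sym.
have cp : cprod (r :: p ++ rev q) = wprod r p * sgab i j * wprod r q.
  rewrite /= rcons_cat wprod_cat hli -rev_cons Eq rev_rcons /= -hlj wprod_rev.
  by rewrite mulrA.
have := cycle_cprod (leqnn _) cyc; rewrite cp => h1.
rewrite A_sig; congr (_ * _).
have := wprod_sq r p; have := wprod_sq r q.
move: h1; move: (wprod r p) (wprod r q) (sgab i j) => a b sg h1 hb ha.
transitivity ((a * sg * b) * (a * b)); last by rewrite h1 mul1r.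
have -> : (a * sg * b) * (a * b) = sg * (a * a) * (b * b) by ring.
by rewrite ha hb !mulr1.
Qed.

End Comb.

Section Geo.
Variable R : realType.

Lemma dotpE m (u v : 'rV[R]_m) : dotp u v = \sum_k u 0 k * v 0 k.
Proof. by rewrite /dotp mxE; apply: eq_bigr => k _; rewrite mxE. Qed.

Lemma dotpC m (u v : 'rV[R]_m) : dotp u v = dotp v u.
Proof. by rewrite !dotpE; apply: eq_bigr => k _; rewrite mulrC. Qed.

Lemma dotp_bound m (u v : 'rV[R]_m) : dotp u u = 1 -> dotp v v = 1 ->
  -1 <= dotp u v <= 1.
Proof.
rewrite !dotpE => hu hv.
have h1 : \sum_k (2 * (u 0 k * v 0 k)) <= \sum_k (u 0 k * u 0 k + v 0 k * v 0 k).
  by apply: ler_sum => k _; have := sqr_ge0 (u 0 k - v 0 k); rewrite expr2; nra.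
have h2 : \sum_k (- 2 * (u 0 k * v 0 k)) <= \sum_k (u 0 k * u 0 k + v 0 k * v 0 k).
  by apply: ler_sum => k _; have := sqr_ge0 (u 0 k + v 0 k); rewrite expr2; nra.
rewrite -!mulr_sumr big_split /= hu hv in h1 h2.
apply/andP; split; lra.
Qed.

Lemma cos_pi_sub (x : R) : cos (pi - x) = - cos x.
Proof. by rewrite cosB cospi sinpi mul0r addr0 mulN1r. Qed.

Lemma cos_pi4_sq : cos (pi / 4 : R) ^+ 2 = 1/2.
Proof.
have := cos_mulr2n (pi / 4 : R).
have -> : (pi / 4 : R) *+ 2 = pi / 2 by rewrite mulr2n; field.
rewrite cos_pihalf mulr2n => h; lra.
Qed.

Lemma cos_pi3_sq : 1/4 <= cos (pi / 3 : R) ^+ 2.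
Proof.
have := cos_mulr2n (pi / 3 : R).
have -> : (pi / 3 : R) *+ 2 = pi - pi / 3 by rewrite mulr2n; field.
rewrite cos_pi_sub mulr2n expr2 => h; nra.
Qed.

Lemma dot_cos n (f : 'I_n.+1 -> 'rV[R]_n.+1) i j : simplex_normals f ->
  dotp (f i) (f j) = - cos (dihedral f i j).
Proof.
case=> hu _; rewrite /dihedral cos_pi_sub acosK ?opprK //.
by rewrite in_itv /=; apply: dotp_bound.
Qed.

Lemma dot_big n (f : 'I_n.+1 -> 'rV[R]_n.+1) i j : simplex_normals f ->
  admissible_angles f -> i != j -> dotp (f i) (f j) != 0 ->
  1/4 <= dotp (f i) (f j) ^+ 2.
Proof.
move=> hf ha ij; rewrite dot_cos // sqrrN oppr_eq0.
have h23 : 2 * pi / 3 = pi - pi / 3 :> R by field.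
have h34 : 3 * pi / 4 = pi - pi / 4 :> R by field.
case: (ha i j ij) => /= [->|[->|[->|[->|->]]]].
- by rewrite cos_pihalf eqxx.
- by rewrite cos_pi3_sq.
- by rewrite h23 cos_pi_sub sqrrN cos_pi3_sq.
- by rewrite cos_pi4_sq; lra.
- by rewrite h34 cos_pi_sub sqrrN cos_pi4_sq; lra.
Qed.

Lemma dot_diag n (f : 'I_n.+1 -> 'rV[R]_n.+1) Gamma i j : simplex_normals f ->
  is_family_diagram f Gamma -> i != j ->
  dotp (f i) (f j) ^+ 2 = cos (pi / (Gamma i j).+2%:R) ^+ 2.
Proof.
move=> hf hd ij; have [k [k2 [ht hG]]] := hd i j ij.
have -> : (Gamma i j).+2 = k by lia.
rewrite dot_cos // sqrrN.
case: ht => ->; first by [].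
case: k k2 {hG} => [|k] // k2.
have hk : (0 : R) < k.+1%:R by rewrite ltr0Sn.
have -> : pi * (k.+1.-1)%:R / k.+1%:R = pi - pi / k.+1%:R :> R.
  rewrite /= -natr1; rewrite -natr1 in hk; field; lra.
by rewrite cos_pi_sub sqrrN.
Qed.

Lemma gram_pd n (f : 'I_n.+1 -> 'rV[R]_n.+1) : simplex_normals f ->
  forall w : 'I_n.+1 -> R, (exists i, w i != 0) ->
  0 < \sum_i \sum_j w i * w j * dotp (f i) (f j).
Proof.
case=> _ hfree w [i0 hi0].
set F := \matrix_(i < n.+1) f i.
set v := \row_i w i *m F.
have vE : forall k, v 0 k = \sum_i w i * f i 0 k.
  by move=> k; rewrite !mxE; apply: eq_bigr => i _; rewrite !mxE.
have vnz : exists k, v 0 k != 0.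
  apply/existsP; apply: contraT; rewrite negb_exists => /forallP h.
  have v0 : v = 0 *m F.
    by apply/rowP => k; rewrite mul0mx [RHS]mxE; apply/eqP; move: (h k); rewrite negbK.
  have := row_free_inj hfree v0; move/rowP/(_ i0); rewrite !mxE => h0.
  by move: hi0; rewrite h0 eqxx.
have -> : \sum_i \sum_j w i * w j * dotp (f i) (f j) = dotp v v.
  rewrite dotpE.
  under [RHS]eq_bigr => k _ do rewrite vE mulr_suml.
  under [RHS]eq_bigr => k _ do under eq_bigr => i _ do rewrite mulr_sumr.
  rewrite [RHS]exchange_big /=; apply: eq_bigr => i _.
  rewrite [RHS]exchange_big /=; apply: eq_bigr => j _.
  rewrite dotpE mulr_sumr; apply: eq_bigr => k _; ring.
rewrite dotpE; case: vnz => k hk.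
rewrite (bigD1 k) //=; have h1 : 0 < v 0 k ^+ 2 by rewrite exprn_even_gt0.
have h2 : 0 <= \sum_(l | l != k) v 0 l * v 0 l.
  by apply: sumr_ge0 => l _; rewrite -expr2 sqr_ge0.
rewrite expr2 in h1; lra.
Qed.

End Geo.

Lemma mxFFt (R : realType) n (f : 'I_n.+1 -> 'rV[R]_n.+1) i j :
  ((\matrix_(i < n.+1) f i) *m (\matrix_(i < n.+1) f i)^T) i j = dotp (f i) (f j).
Proof. by rewrite mxE dotpE; apply: eq_bigr => k _; rewrite !mxE. Qed.

Theorem lemma2 (R : realType) (n : nat) (Gamma : 'I_n.+1 -> 'I_n.+1 -> nat)
  (f g : 'I_n.+1 -> 'rV[R]_n.+1) :
  simplex_normals f -> simplex_normals g ->
  admissible_angles f -> admissible_angles g ->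
  is_family_diagram f Gamma -> is_family_diagram g Gamma ->
  exists (Q : 'M[R]_n.+1) (eps : 'I_n.+1 -> R),
    Q *m Q^T = 1%:M /\
    (forall i, eps i = 1 \/ eps i = -1) /\
    (forall i, f i *m Q = eps i *: g i).
Proof.
move=> hf hg haf hag hdf hdg.
pose A i j := dotp (f i) (f j). pose B i j := dotp (g i) (g j).
have hA1 : forall i, A i i = 1 by case: hf.
have hB1 : forall i, B i i = 1 by case: hg.
have ABsq : forall i j, A i j ^+ 2 = B i j ^+ 2.
  move=> i j; have [->|ij] := eqVneq i j; first by rewrite hA1 hB1.
  by rewrite /A /B (dot_diag hf hdf ij) (dot_diag hg hdg ij).
have [eps [heps hAB]] := @eps_exists R n.+1 A B (fun i j => dotpC _ _)
  (fun i j => dotpC _ _) hA1 hB1 ABsq (fun i j ij h => dot_big hf haf ij h)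
  (gram_pd hf) (gram_pd hg).
set F := \matrix_(i < n.+1) f i.
set G := \matrix_(i < n.+1) g i.
have Fu : F \in unitmx by rewrite -row_free_unit; case: hf.
pose D := diag_mx (\row_i eps i).
exists (invmx F *m D *m G), eps; split; [|split] => //.
  have FFt : F *m F^T = D *m (G *m G^T) *m D.
    apply/matrixP => i j; rewrite mul_mx_diag mul_diag_mx.
    have h1 := mxFFt f i j; rewrite -/F in h1; rewrite h1 !mxE.
    have h2 := mxFFt g i j; rewrite -/G mxE in h2; rewrite h2.
    by rewrite -/(A i j) -/(B i j) hAB mulrAC.
  have E : invmx F *m D *m G *m (invmx F *m D *m G)^T =
      invmx F *m (D *m (G *m G^T) *m D) *m (invmx F)^T.
    by rewrite !trmx_mul tr_diag_mx !mulmxA.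
  have Ftu : F^T \in unitmx by rewrite unitmx_tr.
  by rewrite E -FFt !mulmxA (mulVmx Fu) mul1mx trmx_inv (mulmxV Ftu).
move=> i; rewrite -[f i](rowK f i) -/F -row_mul !mulmxA (mulmxV Fu) mul1mx.
by apply/rowP => k; rewrite mul_diag_mx !mxE.
Qed.
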